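(* Let $A(x)=x^3$ on $J=\mathbb R$ and $\Gamma=\{x+iA(x):x\in\mathbb R\}$. There exist $\delta_0=\delta_0(A)>0$ and $c_0=c_0(A)\in(0,1)$ such that $$\mathtt S[\mathrm{Re}K_\Gamma](\mathbf z)\ge c_0\,M_\epsilon^2$$ for $\mathbf z=(-\epsilon\alpha-i\epsilon^3\alpha^3,\ 0,\ \epsilon\beta+i\epsilon^3\beta^3)$, for all $\alpha,\beta\in[1/2,1]$ and all $0<\epsilon<\min\{1,\delta_0\}$, where $M_\epsilon$ is the Lipschitz constant of the restriction of $A'$ to the interval $(-\epsilon,\epsilon)$.
   Context: $s(x)=\sqrt{1+(A'(x))^2}$. The kernel (normalizing factor $1/(2\pi)$ omitted) is $K_\Gamma(w,z)=\dfrac{A'(x)-i}{s(x)\,[\,x-y+i(A(x)-A(y))\,]}$ for $w=x+iA(x)$, $z=y+iA(y)$, $x\neq y$; $\mathrm{Re}K_\Gamma$ is its real part. For a real-valued $K$ and distinct $z_1,z_2,z_3$, $\mathtt S[K](\mathbf z)=\sum_{\sigma\in S_3}K(z_{\sigma(1)},z_{\sigma(2)})K(z_{\sigma(1)},z_{\sigma(3)})$. The Lipschitz constant of $A'$ on $(-\epsilon,\epsilon)$ is $\sup_{x\neq y\in(-\epsilon,\epsilon)}|A'(x)-A'(y)|/|x-y|$. *)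

(* Defs.v *)
From Stdlib Require Import Reals.
From Coquelicot Require Import Coquelicot.
Open Scope R_scope.

Definition A (x : R) : R := x ^ 3.

Definition Ap (x : R) : R := Derive A x.

Definition s (x : R) : R := sqrt (1 + (Ap x) ^ 2).

Definition gamma (x : R) : C := (x, A x).

(* K_Gamma(w,z) for w = gamma x, z = gamma y (normalizing factor omitted):
   (A'(x) - i) / (s(x) [ x - y + i (A(x) - A(y)) ]) *)
Definition KGamma (x y : R) : C :=
  Cdiv (Cminus (RtoC (Ap x)) Ci) (Cmult (RtoC (s x)) (Cminus (gamma x) (gamma y))).

Definition ReKGamma (x y : R) : R := Re (KGamma x y).

(* S[K](z1,z2,z3) = sum over sigma in S_3 of K(z_s1,z_s2) K(z_s1,z_s3);
   points are given by their parameters. *)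
Definition Ssym (K : R -> R -> R) (z1 z2 z3 : R) : R :=
    K z1 z2 * K z1 z3 + K z1 z3 * K z1 z2
  + K z2 z1 * K z2 z3 + K z2 z3 * K z2 z1
  + K z3 z1 * K z3 z2 + K z3 z2 * K z3 z1.

Definition LipSet (eps : R) (r : R) : Prop :=
  exists x y : R, -eps < x < eps /\ -eps < y < eps /\ x <> y /\
    r = Rabs (Ap x - Ap y) / Rabs (x - y).

Definition Meps (eps : R) : R := real (Lub_Rbar (LipSet eps)).

(* Main.v *)
Require Import Defs.
From Stdlib Require Import Reals Lra Psatz.
From Coquelicot Require Import Coquelicot.
Open Scope R_scope.


Lemma Ap_eq x : Ap x = 3 * x ^ 2.
Proof. unfold Ap, A. apply is_derive_unique. auto_derive; auto. ring. Qed.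

Lemma s_sq x : s x * s x = 1 + 9 * x ^ 4.
Proof. unfold s. rewrite Ap_eq. rewrite sqrt_sqrt. ring. nra. Qed.

Lemma s_pos x : 0 < s x.
Proof. unfold s. apply sqrt_lt_R0. nra. Qed.

Lemma ReK_eq x y : x <> y ->
  ReKGamma x y = (2*x+y) / (s x * (1 + (x^2+x*y+y^2)^2)).
Proof.
  intro H. unfold ReKGamma, KGamma, Cdiv, Cminus, Cmult, Cinv, gamma, RtoC, Ci, A.
  simpl. rewrite Ap_eq. pose proof (s_pos x).
  assert (x - y <> 0) by lra.
  assert (0 < 1 + (x^2+x*y+y^2)^2) by nra.
  field. split; [nra|]. split; [lra|].
  intro Z. assert (Z2 : (s x * (x - y - 0 * (x^3 - y^3)))^2 + (s x * (x^3-y^3) + 0 * (x-y))^2 = 0) by nra.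
  clear Z.
  assert ((s x)^2 * (x-y)^2 * (1 + (x^2+x*y+y^2)^2) = 0) by (rewrite <- Z2; ring).
  apply Rmult_integral in H3 as [H3|H3]; [apply Rmult_integral in H3 as [H3|H3]|]; nra.
Qed.

Lemma Meps_bd eps : 0 < eps -> 0 <= Meps eps <= 6 * eps.
Proof.
  intro He. unfold Meps.
  destruct (Lub_Rbar_correct (LipSet eps)) as [Hub Hl].
  assert (Hu : is_ub_Rbar (LipSet eps) (6*eps)).
  { intros r [x [y [Hx [Hy [Hxy ->]]]]]. rewrite !Ap_eq.
    replace (3*x^2 - 3*y^2) with (3*(x+y)*(x-y)) by ring.
    rewrite Rabs_mult, Rabs_mult. unfold Rdiv. rewrite Rmult_assoc, Rinv_r.
    2:{ apply Rabs_no_R0; lra. }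
    rewrite Rabs_right by lra. simpl.
    assert (Rabs (x+y) <= 2*eps) by (unfold Rabs; destruct Rcase_abs; lra). lra. }
  assert (Hm : LipSet eps (Rabs (Ap 0 - Ap (eps/2)) / Rabs (0 - eps/2))).
  { exists 0, (eps/2). repeat split; try lra. }
  specialize (Hl _ Hu). specialize (Hub _ Hm).
  assert (0 <= Rabs (Ap 0 - Ap (eps/2)) / Rabs (0 - eps/2)).
  { apply Rmult_le_pos; [apply Rabs_pos| left; apply Rinv_0_lt_compat, Rabs_pos_lt; lra]. }
  destruct (Lub_Rbar (LipSet eps)); simpl in *; lra.
Qed.

Lemma divle N D d : 0 <= N -> 0 < D <= d -> N / d <= N / D.
Proof. intros. apply Rmult_le_compat_l; auto. apply Rinv_le_contravar; lra. Qed.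

Theorem lemma1p4 :
  exists delta0 c0 : R, 0 < delta0 /\ 0 < c0 < 1 /\
    forall alpha beta eps : R,
      1/2 <= alpha <= 1 -> 1/2 <= beta <= 1 ->
      0 < eps < Rmin 1 delta0 ->
      Ssym ReKGamma (- (eps * alpha)) 0 (eps * beta) >= c0 * (Meps eps) ^ 2.
Proof.
  exists (1/10), (1/50). split; [lra|]. split; [lra|].
  intros al be eps Ha Hb He.
  assert (Rmin 1 (1/10) = 1/10) as Em by (unfold Rmin; destruct Rle_dec; lra).
  rewrite Em in He.
  destruct (Meps_bd eps) as [M0 M1]; [lra|].
  assert (HM : Meps eps ^ 2 <= 36 * eps^2) by nra.
  set (a := eps*al). set (b := eps*be).
  assert (0 < a <= 1/10) by (unfold a; nra).
  assert (0 < b <= 1/10) by (unfold b; nra).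
  assert (Hab : eps^2 <= 4 * (a*b)).
  { unfold a, b. assert (1/4 <= al*be) by nra. nra. }
  assert (H2a : b <= 2*a) by (unfold a, b; nra).
  assert (H2b : a <= 2*b) by (unfold a, b; nra).
  unfold Ssym.
  rewrite !ReK_eq by (intro Z; lra).
  set (q := (- a) ^ 2 + - a * b + b ^ 2).
  assert (Hq0 : 0 <= q) by (unfold q; nra).
  assert (Hq1 : q <= 1/50) by (unfold q; nra).
  assert (Es0 : s 0 = 1).
  { pose proof (s_sq 0). pose proof (s_pos 0). nra. }
  pose proof (s_sq (-a)) as S1. pose proof (s_sq b) as S3.
  pose proof (s_pos (-a)). pose proof (s_pos b).
  replace ((- a) ^ 2 + - a * 0 + 0 ^ 2) with (a^2) by ring.
  replace (0 ^ 2 + 0 * - a + (- a) ^ 2) with (a^2) by ring.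
  replace (0 ^ 2 + 0 * b + b ^ 2) with (b^2) by ring.
  replace (b ^ 2 + b * 0 + 0 ^ 2) with (b^2) by ring.
  replace (b ^ 2 + b * - a + (- a) ^ 2) with q by (unfold q; ring).
  rewrite Es0.
  set (sa := s (-a)) in *. set (sb := s b) in *.
  replace (1 + 9 * (- a) ^ 4) with (1 + 9 * a^4) in S1 by ring.
  assert (P4a : 0 <= a^4 <= 1/10000).
  { replace (a^4) with ((a^2)^2) by ring. assert (0 <= a^2 <= 1/100) by (split; nra). split; nra. }
  assert (P4b : 0 <= b^4 <= 1/10000).
  { replace (b^4) with ((b^2)^2) by ring. assert (0 <= b^2 <= 1/100) by (split; nra). split; nra. }
  assert (Pq : 0 <= q^2 <= 1/2500) by (split; nra).
  assert (T1 : (2 * - a + 0) / (sa * (1 + (a ^ 2) ^ 2)) * ((2 * - a + b) / (sa * (1 + q ^ 2)))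
     = (2*a*(2*a-b)) / ((1+9*a^4) * ((1+a^4)*(1+q^2)))).
  { rewrite <- S1. field. split; nra. }
  assert (T3 : (2 * b + - a) / (sb * (1 + q ^ 2)) * ((2 * b + 0) / (sb * (1 + (b ^ 2) ^ 2)))
     = (2*b*(2*b-a)) / ((1+9*b^4) * ((1+b^4)*(1+q^2)))).
  { rewrite <- S3. field. split; nra. }
  assert (T2 : (2 * 0 + - a) / (1 * (1 + (a ^ 2) ^ 2)) * ((2 * 0 + b) / (1 * (1 + (b ^ 2) ^ 2)))
     = - (a*b) / ((1+a^4)*(1+b^4))).
  { field. split; nra. }
  assert (D1 : 0 < (1+9*a^4) * ((1+a^4)*(1+q^2)) <= 101/100).
  { split; [nra|]. assert ((1+a^4)*(1+q^2) <= 1+1/1000) by nra. nra. }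
  assert (D3 : 0 < (1+9*b^4) * ((1+b^4)*(1+q^2)) <= 101/100).
  { split; [nra|]. assert ((1+b^4)*(1+q^2) <= 1+1/1000) by nra. nra. }
  pose proof (divle (2*a*(2*a-b)) _ _ ltac:(nra) D1) as L1.
  pose proof (divle (2*b*(2*b-a)) _ _ ltac:(nra) D3) as L3.
  assert (L2 : - (a*b) <= - (a*b) / ((1+a^4)*(1+b^4))).
  { assert (1 <= (1+a^4)*(1+b^4)) by nra.
    apply (Rmult_le_reg_r ((1+a^4)*(1+b^4))); [lra|].
    unfold Rdiv. rewrite Rmult_assoc, Rinv_l by lra. nra. }
  replace ((2 * b + 0) / (sb * (1 + (b ^ 2) ^ 2)) * ((2 * b + - a) / (sb * (1 + q ^ 2))))
    with ((2 * b + - a) / (sb * (1 + q ^ 2)) * ((2 * b + 0) / (sb * (1 + (b ^ 2) ^ 2)))) by ring.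
  replace ((2 * - a + b) / (sa * (1 + q ^ 2)) * ((2 * - a + 0) / (sa * (1 + (a ^ 2) ^ 2))))
    with ((2 * - a + 0) / (sa * (1 + (a ^ 2) ^ 2)) * ((2 * - a + b) / (sa * (1 + q ^ 2)))) by ring.
  replace ((2 * 0 + b) / (1 * (1 + (b ^ 2) ^ 2)) * ((2 * 0 + - a) / (1 * (1 + (a ^ 2) ^ 2))))
    with ((2 * 0 + - a) / (1 * (1 + (a ^ 2) ^ 2)) * ((2 * 0 + b) / (1 * (1 + (b ^ 2) ^ 2)))) by ring.
  rewrite T1, T2, T3.
  set (X1 := 2 * a * (2 * a - b) / ((1 + 9 * a ^ 4) * ((1 + a ^ 4) * (1 + q ^ 2)))) in *.
  set (X3 := 2 * b * (2 * b - a) / ((1 + 9 * b ^ 4) * ((1 + b ^ 4) * (1 + q ^ 2)))) in *.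
  set (X2 := - (a * b) / ((1 + a ^ 4) * (1 + b ^ 4))) in *.
  assert (L1' : 2 * a * (2 * a - b) * (100/101) <= X1) by (eapply Rle_trans; [|exact L1]; right; field).
  assert (L3' : 2 * b * (2 * b - a) * (100/101) <= X3) by (eapply Rle_trans; [|exact L3]; right; field).
  assert (0 <= (a-b)^2) by apply pow2_ge_0.
  assert (Pm : (1/50) * Meps eps ^ 2 <= (1/50) * 36 * (4 * (a*b))) by nra.
  nra.
Qed.
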